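(* Let $n\ge 2$, let $\Delta_n^\circ=\{\mathbf{s}\in\mathbb{R}^n: s_i>0 \text{ for all } i,\ \sum_i s_i=1\}$, let $\partial\Delta_n=\{\mathbf{s}\in\mathbb{R}^n: s_i\ge 0\ \forall i,\ \sum_i s_i=1,\ s_i=0\text{ for some } i\}$, and for $\mathbf{s}\in\mathbb{R}^n$ let $M(\mathbf{s})=\operatorname{Diag}(\mathbf{s})-\mathbf{s}\mathbf{s}^\top$. Let $\sigma_1:\mathbb{R}^n\to\Delta_n^\circ$ be the softmax map $\sigma_1(\mathbf{x})_i=e^{x_i}/\sum_{j}e^{x_j}$, whose Jacobian at $\mathbf{x}$ is $J_{\sigma_1}(\mathbf{x})=M(\sigma_1(\mathbf{x}))$, so that $\sup_{\mathbf{x}\in\mathbb{R}^n}\|J_{\sigma_1}(\mathbf{x})\|_p=\sup_{\mathbf{s}\in\Delta_n^\circ}\|M(\mathbf{s})\|_p$. (a) For $p=1$ or $p=\infty$, this supremum equals $1/2$ and is attained at a point of $\Delta_n^\circ$; in particular, for $\mathbf{x}=(\ln(n-1),0,\dots,0)\in\mathbb{R}^n$, the point $\mathbf{s}=\sigma_1(\mathbf{x})$ lies in $\Delta_n^\circ$ and $\|M(\mathbf{s})\|_p=1/2$. (b) For $p\in(1,\infty)$, the supremum again equals $1/2$. If $n>2$, it is not attained in $\Delta_n^\circ$ (i.e. $\|M(\mathbf{s})\|_p<1/2$ for every $\mathbf{s}\in\Delta_n^\circ$), and there exists a sequence $(\mathbf{s}_k)_{k\ge1}\subset\Delta_n^\circ$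 converging to a point of $\partial\Delta_n$, with $\mathbf{s}_k=\sigma_1(\mathbf{x}_k)$ for some $\mathbf{x}_k\in\mathbb{R}^n$, such that $\lim_{k\to\infty}\|M(\mathbf{s}_k)\|_p=1/2$. If $n=2$, the supremum $1/2$ is attained at a point of $\Delta_2^\circ$.
   Context: For $p\in[1,\infty)$, $\|\mathbf{x}\|_p=(\sum_i|x_i|^p)^{1/p}$ and $\|\mathbf{x}\|_\infty=\max_i|x_i|$; for a square matrix $A$, $\|A\|_p=\sup_{\mathbf{v}\ne0}\|A\mathbf{v}\|_p/\|\mathbf{v}\|_p$ is the induced operator norm. $\operatorname{Diag}(\mathbf{s})$ is the diagonal matrix with diagonal $\mathbf{s}$. *)

(* Defs.v *)
From HB Require Import structures.
From mathcomp Require Import all_boot all_order all_algebra.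
From mathcomp Require Import all_classical all_reals all_analysis.
Set Implicit Arguments. Unset Strict Implicit. Unset Printing Implicit Defensive.
Import Order.TTheory GRing.Theory Num.Theory.
Import numFieldNormedType.Exports.
Local Open Scope classical_set_scope.
Local Open Scope ring_scope.

(* Vector p-norm, p in [1, +oo] given as an extended real:
   finite p : (sum_i |x_i|^p)^(1/p);  p = +oo : max_i |x_i|.
   (The value at -oo is irrelevant and set to 0.) *)
Definition pnorm {R : realType} {n : nat} (p : \bar R) (v : 'cV[R]_n) : R :=
  match p with
  | EFin q => (\sum_i `|v i 0| `^ q) `^ (q^-1)
  | +oo%E => \big[Num.max/0]_i `|v i 0|
  | -oo%E => 0
  end.

Definition opnorm {R : realType} {n : nat} (p : \bar R) (A : 'M[R]_n) : R :=
  sup [set pnorm p (A *m v) / pnorm p v | v in [set v : 'cV[R]_n | v != 0]].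

Definition Mmat {R : realType} {n : nat} (s : 'cV[R]_n) : 'M[R]_n :=
  diag_mx (s^T) - s *m s^T.

Definition softmax {R : realType} {n : nat} (x : 'cV[R]_n) : 'cV[R]_n :=
  \col_i (expR (x i 0) / \sum_j expR (x j 0)).

Definition simplex_int {R : realType} {n : nat} (s : 'cV[R]_n) : Prop :=
  (forall i, 0 < s i 0) /\ \sum_i s i 0 = 1.

Definition simplex_bd {R : realType} {n : nat} (s : 'cV[R]_n) : Prop :=
  (forall i, 0 <= s i 0) /\ \sum_i s i 0 = 1 /\ exists i, s i 0 = 0.

Definition sup_simplex {R : realType} (n : nat) (p : \bar R) : R :=
  sup [set opnorm p (@Mmat R n s) | s in [set s | simplex_int s]].

Definition sup_jac {R : realType} (n : nat) (p : \bar R) : R :=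
  sup [set opnorm p (Mmat (softmax x)) | x in [set: 'cV[R]_n]].

Definition x_star {R : realType} (n : nat) : 'cV[R]_n :=
  \col_i (if val i == 0%N then ln (n.-1)%:R else 0).

(* Main.v *)
Require Import Defs.
From HB Require Import structures.
From mathcomp Require Import all_boot all_order all_algebra.
From mathcomp Require Import all_classical all_reals all_analysis.
From mathcomp Require Import ring lra.
Import Order.TTheory GRing.Theory Num.Theory.
Import numFieldNormedType.Exports.
Local Open Scope classical_set_scope.
Local Open Scope ring_scope.


Section P.
Variable R : realType.

Lemma MmatE n (s : 'cV[R]_n) i j :
  Mmat s i j = s i 0 *+ (i == j) - s i 0 * s j 0.
Proof. by rewrite /Mmat !mxE big_ord1 !mxE. Qed.

Lemma int_le1 n (s : 'cV[R]_n) i : simplex_int s -> 0 <= s i 0 <= 1.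
Proof.
case=> pos sum1; rewrite ltW //=; rewrite -sum1 (bigD1 i) //= lerDl.
by apply: sumr_ge0 => j _; apply: ltW.
Qed.

Lemma rowsum n (s : 'cV[R]_n) i : simplex_int s ->
  \sum_j `|Mmat s i j| = 2 * s i 0 * (1 - s i 0).
Proof.
move=> hs; have /andP[h0 h1] := @int_le1 _ s i hs.
case: hs => pos sum1.
rewrite (bigD1 i) //= MmatE eqxx mulr1n.
have -> : \sum_(j | j != i) `|Mmat s i j| = s i 0 * \sum_(j | j != i) s j 0.
  rewrite mulr_sumr; apply: eq_bigr => j ji.
  rewrite MmatE eq_sym (negbTE ji) mulr0n sub0r normrN ger0_norm //.
  by rewrite mulr_ge0 // ltW.
have -> : \sum_(j | j != i) s j 0 = 1 - s i 0.
  by rewrite -sum1 [X in _ = X - _](bigD1 i) //= addrC addrK.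
rewrite ger0_norm; first by ring.
by rewrite subr_ge0 -{3}(mulr1 (s i 0)); apply: ler_wpM2l.
Qed.

Lemma Msym n (s : 'cV[R]_n) i j : `|Mmat s i j| = `|Mmat s j i|.
Proof.
rewrite !MmatE; have [->|ij] := eqVneq i j; first by [].
by rewrite mulrC.
Qed.

Lemma colsum n (s : 'cV[R]_n) j : simplex_int s ->
  \sum_i `|Mmat s i j| = 2 * s j 0 * (1 - s j 0).
Proof. by move=> hs; rewrite -(@rowsum _ s j hs); apply: eq_bigr => i _; rewrite Msym. Qed.

Lemma half_bound (x : R) : 2 * x * (1 - x) <= 1/2.
Proof. have := sqr_ge0 (2 * x - 1); nra. Qed.

Lemma half_bound_lt (x : R) : x != 1/2 -> 2 * x * (1 - x) < 1/2.
Proof.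
move=> hx; have : 0 < (2 * x - 1) ^+ 2.
  rewrite exprn_even_gt0 //; apply: contra hx; rewrite subr_eq0 => /eqP h.
  apply/eqP; lra.
nra.
Qed.

End P.


Section P2.
Variable R : realType.

Lemma tangent (p x y : R) : 1 <= p -> 0 <= x -> 0 < y ->
  y `^ p + p * y `^ (p - 1) * (x - y) <= x `^ p.
Proof.
move=> p1 x0 y0.
have [->|pn1] := eqVneq p 1.
  rewrite subrr powRr0 !powRr1 ?(ltW y0) //; lra.
have p1' : 1 < p by rewrite lt_neqAle eq_sym pn1.
have p0 : 0 < p by lra.
pose q := p / (p - 1).
have pm0 : 0 < p - 1 by lra.
have q0 : 0 < q by rewrite /q divr_gt0.
have pq : p^-1 + q^-1 = 1.
  rewrite /q invf_div; field; rewrite ?gt_eqF //.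
have H := conjugate_powR x0 (powR_ge0 y (p - 1)) p0 q0 pq.
have E1 : (y `^ (p - 1)) `^ q = y `^ p.
  by rewrite -powRrM /q mulrC mulfVK // gt_eqF.
rewrite E1 in H.
have E2 : y * y `^ (p - 1) = y `^ p by rewrite mulr_powRB1 // ltW.
have H2 : p * (x * y `^ (p - 1)) <= x `^ p + (p - 1) * y `^ p.
  have := ler_wpM2l (ltW p0) H.
  have -> : p * (x `^ p / p + y `^ p / q) = x `^ p + (p - 1) * y `^ p.
    rewrite /q; field; rewrite ?gt_eqF //.
  by [].
have -> : y `^ p + p * y `^ (p - 1) * (x - y) =
   y `^ p + p * (x * y `^ (p - 1)) - p * (y * y `^ (p - 1)) by ring.
rewrite E2; lra.
Qed.

Lemma jensen n (p : R) (a x : 'I_n -> R) : 1 <= p ->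
  (forall j, 0 <= a j) -> (forall j, 0 <= x j) ->
  (\sum_j a j * x j) `^ p <= (\sum_j a j) `^ (p - 1) * \sum_j a j * x j `^ p.
Proof.
move=> p1 a0 x0.
have p0 : 0 < p by lra.
set r := \sum_j a j; set t := \sum_j a j * x j.
have r0 : 0 <= r by apply: sumr_ge0.
have t0 : 0 <= t by apply: sumr_ge0 => j _; rewrite mulr_ge0.
have S0 : 0 <= \sum_j a j * x j `^ p.
  by apply: sumr_ge0 => j _; rewrite mulr_ge0 // powR_ge0.
have [tz|tpos] := eqVneq t 0.
  by rewrite tz powR0 ?gt_eqF // mulr_ge0 // powR_ge0.
have rpos : r != 0.
  apply: contra tpos => /eqP rz; apply/eqP; rewrite /t big1 // => j _.
  have /eqP := rz; rewrite /r psumr_eq0; last by move=> i _; exact: a0.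
  by move=> /allP /(_ j (mem_index_enum j)) /eqP ->; rewrite mul0r.
have rgt0 : 0 < r by rewrite lt_neqAle eq_sym rpos.
have tgt0 : 0 < t by rewrite lt_neqAle eq_sym tpos.
set m := t / r.
have m0 : 0 < m by rewrite divr_gt0.
have h1 : \sum_j a j * (m `^ p + p * m `^ (p - 1) * (x j - m))
          <= \sum_j a j * x j `^ p.
  by apply: ler_sum => j _; apply: ler_wpM2l => //; apply: tangent.
have h2 : \sum_j a j * (m `^ p + p * m `^ (p - 1) * (x j - m)) = r * m `^ p.
  have -> : \sum_j a j * (m `^ p + p * m `^ (p - 1) * (x j - m)) =
     \sum_j (m `^ p + p * m `^ (p - 1) * (- m)) * a j +
     \sum_j (p * m `^ (p - 1)) * (a j * x j).
    by rewrite -big_split /=; apply: eq_bigr => j _; ring.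
  rewrite -!mulr_sumr -/r -/t.
  have -> : t = r * m by rewrite /m mulrC divfK.
  ring.
have -> : t = r * m by rewrite /m mulrC divfK.
rewrite powRM ?(ltW m0) // -mulr_powRB1 // -mulrA.
rewrite mulrCA; apply: ler_wpM2l; first exact: powR_ge0.
by rewrite -h2.
Qed.

End P2.

Set Implicit Arguments. Unset Strict Implicit.

Section P3.
Variable R : realType.

Lemma powR_le (r x y : R) : 0 <= r -> 0 <= x -> x <= y -> x `^ r <= y `^ r.
Proof.
move=> r0 x0 xy; apply: (ge0_ler_powR r0) => //; rewrite nnegrE //.
exact: le_trans xy.
Qed.

Lemma powR_lt (r x y : R) : 0 < r -> 0 <= x -> x < y -> x `^ r < y `^ r.
Proof.
move=> r0 x0 xy; apply: (gt0_ltr_powR r0) => //; rewrite nnegrE //.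
exact: le_trans (ltW xy).
Qed.

Lemma pnormE n (p : R) (v : 'cV[R]_n) :
  pnorm p%:E v = (\sum_i `|v i 0| `^ p) `^ p^-1.
Proof. by []. Qed.

Lemma Mv_le n (s : 'cV[R]_n) (v : 'cV[R]_n) i :
  `|(Mmat s *m v) i 0| <= \sum_j `|Mmat s i j| * `|v j 0|.
Proof.
rewrite mxE; apply: le_trans (ler_norm_sum _ _ _) _.
by apply: ler_sum => j _; rewrite normrM.
Qed.

Definition cw n (s : 'cV[R]_n) (p : R) j :=
  \sum_i (2 * s i 0 * (1 - s i 0)) `^ (p - 1) * `|Mmat s i j|.

Lemma fin_bound n (s : 'cV[R]_n) (p C : R) (v : 'cV[R]_n) :
  simplex_int s -> 1 <= p -> 0 <= C ->
  (forall j, cw s p j <= C) ->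
  pnorm p%:E (Mmat s *m v) <= C `^ p^-1 * pnorm p%:E v.
Proof.
move=> hs p1 C0 hC; rewrite !pnormE.
have p0 : 0 < p by lra.
have S0 : 0 <= \sum_i `|v i 0| `^ p by apply: sumr_ge0 => i _; exact: powR_ge0.
rewrite -powRM //.
apply: powR_le; first by rewrite invr_ge0 ltW.
  by apply: sumr_ge0 => i _; exact: powR_ge0.
apply: (@le_trans _ _ (\sum_i (2 * s i 0 * (1 - s i 0)) `^ (p - 1) *
            \sum_j `|Mmat s i j| * `|v j 0| `^ p)).
  apply: ler_sum => i _.
  apply: (@le_trans _ _ ((\sum_j `|Mmat s i j| * `|v j 0|) `^ p)).
    by apply: powR_le; [exact: ltW | exact: normr_ge0 | exact: Mv_le].
  rewrite -(@rowsum _ _ s i hs); apply: jensen => //.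
rewrite (eq_bigr (fun i => \sum_j (2 * s i 0 * (1 - s i 0)) `^ (p - 1) *
          `|Mmat s i j| * `|v j 0| `^ p)); last first.
  by move=> i _; rewrite mulr_sumr; apply: eq_bigr => j _; rewrite mulrA.
rewrite exchange_big /= mulr_sumr; apply: ler_sum => j _.
rewrite -mulr_suml; apply: ler_wpM2r; first exact: powR_ge0.
exact: hC.
Qed.

Lemma cw_le n (s : 'cV[R]_n) (p : R) j : simplex_int s -> 1 <= p ->
  cw s p j <= (1/2) `^ p.
Proof.
move=> hs p1; rewrite /cw.
have hh : (1/2 : R) `^ p = (1/2) `^ (p - 1) * (1/2).
  by rewrite [RHS]mulrC mulr_powRB1 //; lra.
apply: (@le_trans _ _ (\sum_i (1/2) `^ (p - 1) * `|Mmat s i j|)).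
  apply: ler_sum => i _; apply: ler_wpM2r => //.
  apply: powR_le; [lra | | exact: half_bound].
  by have /andP[] := @int_le1 _ _ s i hs => *; nra.
rewrite -mulr_sumr colsum // hh; apply: ler_wpM2l; first exact: powR_ge0.
exact: half_bound.
Qed.

Lemma half_pow (p : R) : 0 < p -> ((1/2 : R) `^ p) `^ p^-1 = 1/2.
Proof. by move=> p0; rewrite -powRrM mulfV ?gt_eqF // powRr1 //; lra. Qed.

Lemma fin_half n (s : 'cV[R]_n) (p : R) (v : 'cV[R]_n) :
  simplex_int s -> 1 <= p ->
  pnorm p%:E (Mmat s *m v) <= 1/2 * pnorm p%:E v.
Proof.
move=> hs p1; rewrite -(@half_pow p); last by lra.
apply: (fin_bound _ hs p1 (powR_ge0 _ _)) => j; exact: cw_le.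
Qed.

End P3.


Section P4.
Variable R : realType.

Lemma cw_lt n (s : 'cV[R]_n) (p : R) j : simplex_int s -> 1 < p -> (2 < n)%N ->
  cw s p j < (1/2) `^ p.
Proof.
move=> hs p1 n2.
have hh : (1/2 : R) `^ p = (1/2) `^ (p - 1) * (1/2).
  by rewrite [RHS]mulrC mulr_powRB1 //; lra.
have hpos : 0 < (1/2 : R) `^ (p - 1) by apply: powR_gt0; lra.
have r0 i : 0 <= 2 * s i 0 * (1 - s i 0).
  by have /andP[] := @int_le1 _ _ s i hs => *; nra.
have le i : (2 * s i 0 * (1 - s i 0)) `^ (p - 1) <= (1/2) `^ (p - 1).
  by apply: powR_le; [lra | exact: r0 | exact: half_bound].
have sumE : \sum_i (1/2 : R) `^ (p - 1) * `|Mmat s i j| =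
            (1/2) `^ (p - 1) * (2 * s j 0 * (1 - s j 0)).
  by rewrite -mulr_sumr colsum.
have le2 : cw s p j <= \sum_i (1/2 : R) `^ (p - 1) * `|Mmat s i j|.
  by apply: ler_sum => i _; apply: ler_wpM2r.
have [sj|sj] := eqVneq (s j 0) (1/2); last first.
  apply: le_lt_trans le2 _; rewrite sumE hh ltr_pM2l //; exact: half_bound_lt.
have [k sk] : exists k, s k 0 != 1/2.
  case: (pselect (exists k, s k 0 != 1/2)) => // H; exfalso.
  have all k : s k 0 = 1/2.
    by case: (eqVneq (s k 0) (1/2)) => // hk; case: H; exists k.
  case: hs => _ sum1.
  rewrite (eq_bigr (fun=> 1/2)) ?sumr_const ?card_ord // in sum1.
  rewrite -mulr_natl in sum1.
  have : (3 : R) <= n%:R by rewrite ler_nat.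
  lra.
have kj : k != j by apply: contra sk => /eqP ->; rewrite sj.
have akj : 0 < `|Mmat s k j|.
  rewrite MmatE (negbTE kj) mulr0n sub0r normrN normr_gt0 mulf_neq0 // gt_eqF //.
  - by case: hs.
  - by case: hs.
have e : 2 * s j 0 * (1 - s j 0) = 1/2 by rewrite sj; field.
rewrite e in sumE.
rewrite hh -sumE /cw [X in X < _](bigD1 k) //= [X in _ < X](bigD1 k) //=.
apply: ltr_leD.
  rewrite ltr_pM2r //; apply: powR_lt; [lra | exact: r0 | exact: half_bound_lt].
by apply: ler_sum => i _; apply: ler_wpM2r.
Qed.

Lemma strict_bound n (s : 'cV[R]_n) (p : R) : simplex_int s -> 1 < p -> (2 < n)%N ->
  exists K, K < 1/2 /\ forall v, pnorm p%:E (Mmat s *m v) <= K * pnorm p%:E v.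
Proof.
move=> hs p1 n2.
have p0 : 0 < p by lra.
set C := \big[Order.max/0]_j cw s p j.
have C0 : 0 <= C by apply: bigmax_ge_id.
have Clt : C < (1/2) `^ p.
  by apply: bigmax_lt; [apply: powR_gt0; lra | move=> j _; exact: cw_lt].
exists (C `^ p^-1); split.
  rewrite -[X in _ < X](@half_pow _ p p0); apply: powR_lt => //.
  by rewrite invr_gt0.
move=> v; apply: fin_bound => //; first lra.
move=> j; exact: le_bigmax.
Qed.

Lemma pnorm_infE n (v : 'cV[R]_n) : pnorm +oo%E v = \big[Num.max/0]_i `|v i 0|.
Proof. by []. Qed.

Lemma inf_half n (s : 'cV[R]_n) v : simplex_int s ->
  pnorm +oo%E (Mmat s *m v) <= 1/2 * pnorm +oo%E v.
Proof.
move=> hs; rewrite !pnorm_infE; set m := \big[Num.max/0]_i `|v i 0|.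
have m0 : 0 <= m by apply: bigmax_ge_id.
apply: bigmax_le; first by rewrite mulr_ge0.
move=> i _; apply: le_trans (Mv_le _ _ _) _.
apply: (@le_trans _ _ (\sum_j `|Mmat s i j| * m)).
  by apply: ler_sum => j _; apply: ler_wpM2l => //; exact: le_bigmax.
rewrite -mulr_suml rowsum //; apply: ler_wpM2r => //; exact: half_bound.
Qed.

Lemma nz_entry n (v : 'cV[R]_n) : v != 0 -> exists i, v i 0 != 0.
Proof.
move=> vn; case: (pselect (exists i, v i 0 != 0)) => // H; exfalso.
move/negP: vn; apply; apply/eqP/matrixP => i j.
rewrite (ord1 j) mxE; case: (eqVneq (v i 0) 0) => // h.
by case: H; exists i.
Qed.

Lemma pnorm_fin_gt0 n (p : R) (v : 'cV[R]_n) : 0 < p -> v != 0 -> 0 < pnorm p%:E v.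
Proof.
move=> p0 /nz_entry [i vi]; rewrite pnormE; apply: powR_gt0.
rewrite (bigD1 i) //=.
have : 0 < `|v i 0| `^ p by apply: powR_gt0; rewrite normr_gt0.
have : 0 <= \sum_(j | j != i) `|v j 0| `^ p.
  by apply: sumr_ge0 => j _; exact: powR_ge0.
lra.
Qed.

Lemma pnorm_inf_gt0 n (v : 'cV[R]_n) : v != 0 -> 0 < pnorm +oo%E v.
Proof.
move=> /nz_entry [i vi]; rewrite pnorm_infE.
apply: lt_le_trans (le_bigmax _ _ i); by rewrite normr_gt0.
Qed.

Lemma opnorm_ub n (p : \bar R) (A : 'M[R]_n) (K : R) : (0 < n)%N ->
  (forall v : 'cV[R]_n, v != 0 -> 0 < pnorm p v) ->
  (forall v, pnorm p (A *m v) <= K * pnorm p v) -> opnorm p A <= K.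
Proof.
move=> n0 hpos hK; apply: ge_sup.
  exists (pnorm p (A *m const_mx 1) / pnorm p (const_mx 1 : 'cV[R]_n)).
  exists (const_mx 1 : 'cV[R]_n) => //.
  apply/eqP => /matrixP /(_ (Ordinal n0) 0); rewrite !mxE; apply/eqP; exact: oner_neq0.
move=> y [v vn <-]; rewrite ler_pdivrMr; [exact: hK | exact: hpos].
Qed.

Lemma opnorm_lb n (p : \bar R) (A : 'M[R]_n) (K : R) (v : 'cV[R]_n) :
  (forall v : 'cV[R]_n, v != 0 -> 0 < pnorm p v) ->
  (forall v, pnorm p (A *m v) <= K * pnorm p v) -> v != 0 ->
  pnorm p (A *m v) / pnorm p v <= opnorm p A.
Proof.
move=> hpos hK vn; apply: ub_le_sup; last by exists v.
exists K; move=> y [w wn <-]; rewrite ler_pdivrMr; [exact: hK | exact: hpos].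
Qed.

Lemma pnormZ n (p a : R) (v : 'cV[R]_n) : 0 < p -> 0 <= a ->
  pnorm p%:E (a *: v) = a * pnorm p%:E v.
Proof.
move=> p0 a0; rewrite !pnormE.
under eq_bigr => i _ do rewrite mxE normrM (ger0_norm a0) powRM ?normr_ge0 //.
rewrite -mulr_sumr powRM ?powR_ge0 //; last first.
  by apply: sumr_ge0 => i _; exact: powR_ge0.
by rewrite -powRrM mulfV ?gt_eqF // powRr1.
Qed.

End P4.


Section P5.
Variable R : realType.

Lemma softmax_int n (x : 'cV[R]_n) : (0 < n)%N -> simplex_int (softmax x).
Proof.
move=> n0; have D0 : 0 < \sum_j expR (x j 0).
  rewrite (bigD1 (Ordinal n0)) //=.
  have := expR_gt0 (x (Ordinal n0) 0).
  have : 0 <= \sum_(j | j != Ordinal n0) expR (x j 0).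
    by apply: sumr_ge0 => j _; exact: expR_ge0.
  lra.
split.
  by move=> i; rewrite mxE divr_gt0 // expR_gt0.
under eq_bigr => i _ do rewrite mxE.
by rewrite -mulr_suml mulfV // gt_eqF.
Qed.

Lemma softmax_ln n (s : 'cV[R]_n) : simplex_int s ->
  softmax (\col_i ln (s i 0)) = s.
Proof.
case=> pos sum1; apply/matrixP => i j; rewrite (ord1 j) !mxE.
under eq_bigr => k _ do rewrite mxE lnK ?posrE //.
by rewrite sum1 divr1 lnK ?posrE.
Qed.

Lemma M_one n (s : 'cV[R]_n) : simplex_int s -> Mmat s *m (const_mx 1 : 'cV[R]_n) = 0.
Proof.
case=> pos sum1; apply/matrixP => i j; rewrite (ord1 j) !mxE.
under eq_bigr => k _ do rewrite MmatE mxE mulr1.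
rewrite sumrB -mulr_sumr sum1 mulr1 (bigD1 i) //= eqxx mulr1n big1 ?addr0 ?subrr //.
by move=> k ki; rewrite eq_sym (negbTE ki).
Qed.

Lemma M_delta n (s : 'cV[R]_n) k i : (Mmat s *m (delta_mx k 0 : 'cV[R]_n)) i 0 = Mmat s i k.
Proof. by rewrite -colE mxE. Qed.

Variable m : nat.
Local Notation N := m.+2.
Definition i0 : 'I_N := ord0.
Definition i1 : 'I_N := @Ordinal N 1 isT.

Lemma i01 : i0 != i1. Proof. by []. Qed.

Lemma delta_nz : (delta_mx i0 0 : 'cV[R]_N) != 0.
Proof. by apply/eqP => /matrixP /(_ i0 0); rewrite !mxE /= => /eqP; rewrite oner_eq0. Qed.

Lemma pnorm1E n (v : 'cV[R]_n) : pnorm 1%E v = \sum_i `|v i 0|.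
Proof.
rewrite pnormE invr1 powRr1; last by apply: sumr_ge0 => i _; exact: powR_ge0.
by apply: eq_bigr => i _; rewrite powRr1.
Qed.

Lemma p1_val (s : 'cV[R]_N) : simplex_int s -> s i0 0 = 1/2 ->
  pnorm 1%E (Mmat s *m delta_mx i0 0) / pnorm 1%E (delta_mx i0 0 : 'cV[R]_N) = 1/2.
Proof.
move=> hs h; rewrite !pnorm1E.
under eq_bigr => i _ do rewrite M_delta.
rewrite colsum // h (bigD1 i0) //= big1; last first.
  by move=> i ii; rewrite mxE (negbTE ii) normr0.
rewrite mxE !eqxx normr1 addr0 divr1.
lra.
Qed.

Definition vinf : 'cV[R]_N := 2 *: delta_mx i0 0 - const_mx 1.

Lemma vinf_nz : vinf != 0.
Proof.
apply/eqP => /matrixP /(_ i0 0); rewrite !mxE /=.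
lra.
Qed.

Lemma pinf_val (s : 'cV[R]_N) : simplex_int s -> s i0 0 = 1/2 ->
  1/2 <= pnorm +oo%E (Mmat s *m vinf) / pnorm +oo%E vinf.
Proof.
move=> hs h.
have v1 : pnorm +oo%E vinf <= 1.
  rewrite pnorm_infE; apply: bigmax_le => // i _; rewrite !mxE.
  case: (i == i0); rewrite eqxx /= ?mulr1n ?mulr0n ?mulr1 ?mulr0.
    by rewrite ger0_norm; lra.
  by rewrite sub0r normrN normr1.
have vp : 0 < pnorm +oo%E vinf by apply: pnorm_inf_gt0; exact: vinf_nz.
have Mv : 1/2 <= pnorm +oo%E (Mmat s *m vinf).
  rewrite pnorm_infE; apply: le_trans (le_bigmax _ _ i0).
  rewrite /vinf mulmxBr M_one // subr0 -scalemxAr mxE M_delta MmatE eqxx mulr1n h.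
  rewrite ger0_norm; lra.
rewrite ler_pdivlMr //; nra.
Qed.

End P5.


Section P6.
Variable R : realType.
Variable m : nat.
Local Notation N := m.+2.
Local Notation j0 := (i0 m).
Local Notation j1 := (i1 m).

Definition sa (a : R) : 'cV[R]_N :=
  \col_i (if (val i < 2)%N then a else (1 - 2 * a) / m%:R).

Lemma sa_sum a : \sum_i sa a i 0 = a + (a + ((1 - 2 * a) / m%:R) *+ m).
Proof.
rewrite big_ord_recl big_ord_recl !mxE /=.
rewrite (eq_bigr (fun _ => (1 - 2 * a) / m%:R)); last by move=> i _; rewrite mxE /=.
by rewrite sumr_const card_ord.
Qed.

Lemma sa_int a : (0 < m)%N -> 0 < a -> a < 1/2 -> simplex_int (sa a).
Proof.
move=> m0 a0 a1; split.
  move=> i; rewrite mxE; case: ifP => _ //; apply: divr_gt0; first lra.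
  by rewrite ltr0n.
rewrite sa_sum -mulr_natr divfK; first lra.
by rewrite pnatr_eq0 -lt0n.
Qed.

Lemma sa_int0 : m = 0%N -> simplex_int (sa (1/2)).
Proof.
move=> m0; split.
  move=> i; rewrite mxE; case: i => k hk /=; move: (hk); rewrite m0 => ->; lra.
by rewrite sa_sum m0 mulr0n; lra.
Qed.

Lemma sa_bd : (0 < m)%N -> simplex_bd (sa (1/2)).
Proof.
move=> m0; split; [|split].
- move=> i; rewrite mxE; case: ifP => _; first lra.
  by rewrite (_ : 1 - 2 * (1/2) = 0 :> R) ?mul0r //; lra.
- by rewrite sa_sum (_ : 1 - 2 * (1/2) = 0 :> R) ?mul0r ?mul0rn; lra.
- have h2 : (2 < N)%N by rewrite ltnS ltnS.
  exists (Ordinal h2); rewrite mxE /=.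
  by rewrite (_ : 1 - 2 * (1/2) = 0 :> R) ?mul0r //; lra.
Qed.

Definition wdir : 'cV[R]_N := \col_i (if (val i < 2)%N then -1 else 2 / m%:R).

Lemma sa_aff a : sa a = sa (1/2) + (1/2 - a) *: wdir.
Proof.
apply/matrixP => i j; rewrite !mxE; case: ifP => _; ring.
Qed.

Definition v01 : 'cV[R]_N := delta_mx j0 0 - delta_mx j1 0.

Lemma v01_nz : v01 != 0.
Proof.
apply/eqP => /matrixP /(_ j0 0); rewrite !mxE /=; lra.
Qed.

Lemma Msa_v01 a : Mmat (sa a) *m v01 = a *: v01.
Proof.
have ME := @MmatE R N (sa a).
have s0 : sa a j0 0 = a by rewrite mxE.
have s1 : sa a j1 0 = a by rewrite mxE.
move: (Mmat (sa a)) ME => M ME.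
apply/matrixP => i j; rewrite (ord1 j) /v01 mulmxBr -!colE !mxE !ME s0 s1.
rewrite eqxx !andbT.
have e01 : (j0 == j1) = false by apply/negbTE; exact: (@i01 m).
have e10 : (j1 == j0) = false by rewrite eq_sym.
have [->|n0] := eqVneq i j0.
  by rewrite s0 ?eqxx ?e01 /= ?mulr1n ?mulr0n; ring.
have [->|n1] := eqVneq i j1.
  by rewrite s1 ?eqxx ?e10 /= ?mulr1n ?mulr0n; ring.
by rewrite ?(negbTE n0) ?(negbTE n1) /= ?mulr0n; ring.
Qed.

Lemma xstar_val : softmax (x_star N : 'cV[R]_N) j0 0 = 1/2.
Proof.
rewrite mxE big_ord_recl !mxE /=.
rewrite (eq_bigr (fun _ => 1)); last by move=> i _; rewrite mxE /= expR0.
rewrite sumr_const card_ord lnK ?posrE ?ltr0n //.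
have t0 : (m.+1%:R : R) != 0 by rewrite pnatr_eq0.
field.
have hm : (0:R) <= m%:R by apply: ler0n.
rewrite gt_eqF //; lra.
Qed.

End P6.


Section P7.
Variable R : realType.

Lemma sup_half (E : set R) : (forall y, E y -> y <= 1/2) ->
  (forall e, 0 < e -> exists2 y, E y & 1/2 - e <= y) -> sup E = 1/2.
Proof.
move=> ub lb; apply/eqP; rewrite eq_le; apply/andP; split.
  apply: ge_sup => //; have [y Ey _] := lb 1 ltr01; by exists y.
apply/ler_addgt0Pr => e e0; have [y Ey hy] := lb e e0.
have : y <= sup E by apply: ub_le_sup => //; exists (1/2).
lra.
Qed.

Lemma supjac_eq n (p : \bar R) : (0 < n)%N -> sup_jac n p = sup_simplex n p.
Proof.
move=> n0; rewrite /sup_jac /sup_simplex; congr sup; apply/seteqP; split => y.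
  by case=> x _ <-; exists (softmax x) => //; exact: softmax_int.
by case=> s hs <-; exists (\col_i ln (s i 0)) => //; rewrite softmax_ln.
Qed.

Lemma opnorm_fin_le n (s : 'cV[R]_n) (p : R) : (0 < n)%N -> 1 <= p -> simplex_int s ->
  opnorm p%:E (Mmat s) <= 1/2.
Proof.
move=> n0 p1 hs; apply: opnorm_ub => //.
  move=> v vn; apply: pnorm_fin_gt0 => //; lra.
move=> v; exact: fin_half.
Qed.

Lemma opnorm_inf_le n (s : 'cV[R]_n) : (0 < n)%N -> simplex_int s ->
  opnorm +oo%E (Mmat s) <= 1/2.
Proof.
move=> n0 hs; apply: opnorm_ub => //.
  move=> v vn; exact: pnorm_inf_gt0.
move=> v; exact: inf_half.
Qed.

Lemma sa_lb m (a p : R) : simplex_int (sa m a) -> 0 <= a -> 1 <= p ->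
  a <= opnorm p%:E (Mmat (sa m a)).
Proof.
move=> hs a0 p1.
have p0 : 0 < p by lra.
have := @opnorm_lb _ m.+2 p%:E (Mmat (sa m a)) (1/2) (v01 R m).
rewrite Msa_v01 pnormZ // mulfK; last by rewrite gt_eqF // pnorm_fin_gt0 // v01_nz.
apply.
- by move=> v vn; apply: pnorm_fin_gt0.
- by move=> v; exact: fin_half.
- exact: v01_nz.
Qed.

Lemma prop2_aux (n : nat) (hn : (2 <= n)%N) :
  (forall p : \bar R, (p = 1%E \/ p = +oo%E) ->
     sup_simplex n p = 1 / 2 /\ sup_jac n p = 1 / 2 /\
     (exists s : 'cV[R]_n, simplex_int s /\ opnorm p (Mmat s) = 1 / 2) /\
     (simplex_int (softmax (x_star n : 'cV[R]_n)) /\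
      opnorm p (Mmat (softmax (x_star n : 'cV[R]_n))) = 1 / 2))
  /\
  (forall p : R, 1 < p ->
     sup_simplex n p%:E = 1 / 2 /\ sup_jac n p%:E = 1 / 2 /\
     ((2 < n)%N ->
        (forall s : 'cV[R]_n, simplex_int s -> opnorm p%:E (Mmat s) < 1 / 2) /\
        (exists (x_ : nat -> 'cV[R]_n) (s0 : 'cV[R]_n),
           simplex_bd s0 /\
           (forall k, simplex_int (softmax (x_ k))) /\
           (fun k => softmax (x_ k)) @ \oo --> s0 /\
           (fun k => opnorm p%:E (Mmat (softmax (x_ k)))) @ \oo --> (1 / 2 : R))) /\
     (n = 2%N ->
        exists s : 'cV[R]_n, simplex_int s /\ opnorm p%:E (Mmat s) = 1 / 2)).
Proof.
case: n hn => [|[|m]] // _.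
have n0 : (0 < m.+2)%N by [].
split.
  move=> p hp.
  set sx := softmax (x_star m.+2 : 'cV[R]_m.+2).
  have hsx : simplex_int sx by exact: softmax_int.
  have hv : sx (i0 m) 0 = 1/2 by exact: xstar_val.
  have ub : forall s : 'cV[R]_m.+2, simplex_int s -> opnorm p (Mmat s) <= 1/2.
    move=> s hs; case: hp => ->; [exact: opnorm_fin_le | exact: opnorm_inf_le].
  have at1 : opnorm p (Mmat sx) = 1/2.
    apply/eqP; rewrite eq_le ub //=; case: hp => ->.
    + rewrite -(p1_val hsx hv); apply: (@opnorm_lb _ _ _ _ (1/2)).
      * by move=> v vn; apply: pnorm_fin_gt0.
      * by move=> v; exact: fin_half.
      * exact: delta_nz.
    + apply: le_trans (pinf_val hsx hv) _; apply: (@opnorm_lb _ _ _ _ (1/2)).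
      * by move=> v vn; apply: pnorm_inf_gt0.
      * by move=> v; exact: inf_half.
      * exact: vinf_nz.
  have sup1 : sup_simplex m.+2 p = 1/2.
    apply: sup_half.
      by move=> y [s hs <-]; exact: ub.
    move=> e e0; exists (1/2); first by exists sx.
    lra.
  split; first exact: sup1.
  split; first by rewrite supjac_eq.
  split; first by exists sx.
  by [].
move=> p p1.
have p1' : 1 <= p by lra.
have ub : forall s : 'cV[R]_m.+2, simplex_int s -> opnorm p%:E (Mmat s) <= 1/2.
  by move=> s hs; exact: opnorm_fin_le.
have sup1 : sup_simplex m.+2 p%:E = 1/2.
  apply: sup_half.
    by move=> y [s hs <-]; exact: ub.
  move=> e e0.
  move: ub; clear n0; case: m => [|m] ub.
    have hs := @sa_int0 R 0 erefl.
    exists (opnorm p%:E (Mmat (sa 0 (1/2)))); first by exists (sa 0 (1/2)).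
    have := @sa_lb 0 (1/2) p hs; have : 0 <= 1/2 :> R by lra.
    move=> h1 /(_ h1 p1'); lra.
  have [e14|e14] := lerP e (1/4).
    have hs : simplex_int (sa m.+1 (1/2 - e)) by apply: sa_int; [by [] | lra | lra].
    exists (opnorm p%:E (Mmat (sa m.+1 (1/2 - e)))); first by exists (sa m.+1 (1/2 - e)).
    have := @sa_lb m.+1 (1/2 - e) p hs; have : 0 <= 1/2 - e by lra.
    move=> h1 /(_ h1 p1'); lra.
  have hs : simplex_int (sa m.+1 (1/4 : R)).
    apply: (@sa_int R m.+1 (1/4)); [by [] | lra | lra].
  exists (opnorm p%:E (Mmat (sa m.+1 (1/4)))); first by exists (sa m.+1 (1/4)).
  have := @sa_lb m.+1 (1/4) p hs; have : 0 <= 1/4 :> R by lra.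
  move=> h1 /(_ h1 p1'); lra.
split; first exact: sup1.
split; first by rewrite supjac_eq.
split.
  move=> m0; split.
    move=> s hs; have [K [K2 hK]] := strict_bound hs p1 m0.
    apply: le_lt_trans K2; apply: opnorm_ub => //.
    by move=> v vn; apply: pnorm_fin_gt0 => //; lra.
  set a_ := fun k : nat => 1/2 - harmonic k / 4 : R.
  have hk k : (0 : R) < (harmonic k : R) <= 1.
    by rewrite /harmonic /= invr_gt0 ltr0n /= invf_le1 ?ltr0n // ler1n.
  have ha k : simplex_int (sa m (a_ k)).
    have /andP[h1 h2] := hk k.
    apply: sa_int; [exact: m0 | rewrite /a_; lra | rewrite /a_; lra].
  have sx k : softmax (\col_i ln (sa m (a_ k) i 0)) = sa m (a_ k).
    by rewrite softmax_ln.
  exists (fun k => \col_i ln (sa m (a_ k) i 0)), (sa m (1/2)).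
  split; first exact: sa_bd.
  split; first by move=> k; rewrite sx.
  have ca : a_ k @[k --> \oo] --> (1/2 : R).
    rewrite /a_ -[X in _ --> X]subr0; apply: cvgB; first exact: cvg_cst.
    rewrite -(mul0r (4^-1 : R)); apply: cvgMl; exact: cvg_harmonic.
  split.
    have -> : (fun k => softmax (\col_i ln (sa m (a_ k) i 0))) =
              (fun k => sa m (1/2) + (1/2 - a_ k) *: wdir R m).
      by apply: funext => k; rewrite sx -sa_aff.
    rewrite -[X in _ --> X]addr0; apply: cvgD; first exact: cvg_cst.
    rewrite -(scale0r (wdir R m)); apply: cvgZl.
    rewrite -(subrr (1/2 : R)); apply: cvgB => //; exact: cvg_cst.
  apply: (@squeeze_cvgr _ _ _ _ a_ (fun=> 1/2)) => //; last exact: cvg_cst.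
  apply: nearW => k; rewrite sx; apply/andP; split.
    have /andP[h1 h2] := hk k.
    by apply: sa_lb => //; rewrite /a_; lra.
  exact: opnorm_fin_le.
move=> [m0]; rewrite m0 in ub *.
exists (sa 0 (1/2)); have hs := @sa_int0 R 0 erefl; split => //.
apply/eqP; rewrite eq_le ub //=.
apply: sa_lb => //; lra.
Qed.

End P7.

Unset Implicit Arguments.

Theorem proposition2 (R : realType) (n : nat) (hn : (2 <= n)%N) :
  (* (a) p = 1 or p = oo *)
  (forall p : \bar R, (p = 1%E \/ p = +oo%E) ->
     sup_simplex n p = 1 / 2 /\ sup_jac n p = 1 / 2 /\
     (exists s : 'cV[R]_n, simplex_int s /\ opnorm p (Mmat s) = 1 / 2) /\
     (simplex_int (softmax (x_star n : 'cV[R]_n)) /\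
      opnorm p (Mmat (softmax (x_star n : 'cV[R]_n))) = 1 / 2))
  /\
  (* (b) 1 < p < oo *)
  (forall p : R, 1 < p ->
     sup_simplex n p%:E = 1 / 2 /\ sup_jac n p%:E = 1 / 2 /\
     ((2 < n)%N ->
        (forall s : 'cV[R]_n, simplex_int s -> opnorm p%:E (Mmat s) < 1 / 2) /\
        (exists (x_ : nat -> 'cV[R]_n) (s0 : 'cV[R]_n),
           simplex_bd s0 /\
           (forall k, simplex_int (softmax (x_ k))) /\
           (fun k => softmax (x_ k)) @ \oo --> s0 /\
           (fun k => opnorm p%:E (Mmat (softmax (x_ k)))) @ \oo --> (1 / 2 : R))) /\
     (n = 2%N ->
        exists s : 'cV[R]_n, simplex_int s /\ opnorm p%:E (Mmat s) = 1 / 2)).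
Proof. exact: (@prop2_aux R n hn). Qed.
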